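(* Let $n\in\mathbb{N}$ and let $\Xi$ be the set of all finitely supported probability measures $\eta$ on $[-1,1]$ satisfying $\int x^\ell\,d\eta(x)=\frac12\int_{-1}^1x^\ell\,dx$ for $\ell=0,\dots,n$. For such $\eta$ let $u(\eta)=\min\{v\in\mathbb{R}^+:\mathrm{supp}\,\eta\subset[-v,v]\}$. Let $r=\lfloor n/2\rfloor+1$, let $x_1^*<\dots<x_r^*$ be the zeros of the Legendre polynomial $P_r(x)$ (orthogonal with respect to Lebesgue measure on $[-1,1]$). Then $$\min_{\eta\in\Xi}u(\eta)=|x_1^*|,$$ and the minimum is attained by the measure $\eta^*$ putting mass $w_i^*=\frac12\int_{-1}^1\ell_i(x)\,dx$ at $x_i^*$, $i=1,\dots,r$, where $\ell_i(x)=\prod_{j\ne i}\frac{x-x_j^*}{x_i^*-x_j^*}$ is the $i$-th Lagrange interpolation polynomial with nodes $x_1^*,\dots,x_r^*$. *)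

(* Defs.v *)
From Stdlib Require Import Reals Lra Lia List.
From Coquelicot Require Import Coquelicot.
Open Scope R_scope.

(* Legendre polynomials P_k (standard normalisation P_k(1)=1), given by
   Bonnet's recurrence (k+1) P_{k+1} = (2k+1) x P_k - k P_{k-1}. *)
Fixpoint legendre_pair (k : nat) (x : R) : R * R :=
  (* returns (P_k x, P_{k+1} x) *)
  match k with
  | O => (1, x)
  | S m =>
      let (p, q) := legendre_pair m x in
      (q, ((2 * INR m + 3) * x * q - (INR m + 1) * p) / (INR m + 2))
  end.

Definition legendre (k : nat) (x : R) : R := fst (legendre_pair k x).

(* A finitely supported measure on R is encoded as the list of its atoms
   (point, mass); the points are pairwise distinct and masses positive,
   so the list of points is exactly the support. *)
Definition fmeasure := list (R * R).

Definition total_mass (eta : fmeasure) : R :=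
  fold_right (fun p acc => snd p + acc) 0 eta.

Definition moment (eta : fmeasure) (l : nat) : R :=
  fold_right (fun p acc => snd p * (fst p) ^ l + acc) 0 eta.

Definition in_Xi (n : nat) (eta : fmeasure) : Prop :=
  NoDup (map fst eta) /\
  (forall p, In p eta -> -1 <= fst p <= 1 /\ 0 < snd p) /\
  total_mass eta = 1 /\
  (forall l : nat, (l <= n)%nat ->
     moment eta l = / 2 * RInt (fun x => x ^ l) (-1) 1).

(* u(eta) = min { v >= 0 : supp eta subset [-v,v] } = max_{x in supp} |x|
   (and 0 for the empty list, which does not occur for probability measures). *)
Definition u (eta : fmeasure) : R :=
  fold_right (fun p acc => Rmax (Rabs (fst p)) acc) 0 eta.

Definition lagrange (xs : list R) (i : nat) (x : R) : R :=
  fold_right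
    (fun j acc =>
       if Nat.eqb j i then acc
       else (x - nth j xs 0) / (nth i xs 0 - nth j xs 0) * acc)
    1 (seq 0 (length xs)).

Definition gl_weight (xs : list R) (i : nat) : R :=
  / 2 * RInt (lagrange xs i) (-1) 1.

Definition gl_measure (xs : list R) : fmeasure :=
  map (fun i => (nth i xs 0, gl_weight xs i)) (seq 0 (length xs)).

(* Main.v *)
Require Import Defs.
From Stdlib Require Import Reals List Lra Lia Factorial.
From Coquelicot Require Import Coquelicot.
Open Scope R_scope.

Fixpoint peval (cs : list R) (x : R) : R :=
  match cs with nil => 0 | c :: cs' => c + x * peval cs' x end.

Definition pdeg (f : R -> R) (d : nat) : Prop :=
  exists cs, (length cs <= S d)%nat /\ forall x, f x = peval cs x.

Lemma pdeg_ext f g d : (forall x, f x = g x) -> pdeg f d -> pdeg g d.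
Proof. intros H [cs [H1 H2]]. exists cs; split; auto. intro x; rewrite <- H; auto. Qed.

Lemma pdeg_mono f d d' : (d <= d')%nat -> pdeg f d -> pdeg f d'.
Proof. intros H [cs [H1 H2]]. exists cs; split; auto; lia. Qed.

Lemma pdeg_const c : pdeg (fun _ => c) 0.
Proof. exists (c :: nil); split; simpl; auto. intros; ring. Qed.

Lemma pdeg_zero d : pdeg (fun _ => 0) d.
Proof. exists nil; split; simpl; auto; lia. Qed.

Fixpoint padd (cs ds : list R) : list R :=
  match cs, ds with
  | nil, _ => ds
  | _, nil => cs
  | c :: cs', d :: ds' => (c + d) :: padd cs' ds'
  end.

Lemma padd_eval cs ds x : peval (padd cs ds) x = peval cs x + peval ds x.
Proof.
  revert ds; induction cs as [|c cs IH]; intros [|d ds]; simpl; try ring.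
  rewrite IH; ring.
Qed.

Lemma padd_len cs ds : length (padd cs ds) = Nat.max (length cs) (length ds).
Proof.
  revert ds; induction cs as [|c cs IH]; intros [|d ds]; simpl; auto.
Qed.

Lemma pdeg_add f g d : pdeg f d -> pdeg g d -> pdeg (fun x => f x + g x) d.
Proof.
  intros [cs [H1 H2]] [ds [H3 H4]]. exists (padd cs ds); split.
  rewrite padd_len; lia. intro x; rewrite padd_eval, H2, H4; auto.
Qed.

Lemma pdeg_scal a f d : pdeg f d -> pdeg (fun x => a * f x) d.
Proof.
  intros [cs [H1 H2]]. exists (map (Rmult a) cs); split.
  rewrite length_map; auto.
  intro x; rewrite H2. clear; induction cs; simpl; try ring. rewrite <- IHcs; ring.
Qed.

Lemma pdeg_opp f d : pdeg f d -> pdeg (fun x => - f x) d.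
Proof. intro H. apply pdeg_ext with (fun x => (-1) * f x). intros; ring. now apply pdeg_scal. Qed.

Lemma pdeg_sub f g d : pdeg f d -> pdeg g d -> pdeg (fun x => f x - g x) d.
Proof. intros. apply pdeg_ext with (fun x => f x + - g x). intros; ring.
  apply pdeg_add; auto. now apply pdeg_opp. Qed.

Lemma pdeg_mulX f d : pdeg f d -> pdeg (fun x => x * f x) (S d).
Proof.
  intros [cs [H1 H2]]. exists (0 :: cs); split. simpl; lia.
  intro x; simpl; rewrite H2; ring.
Qed.

Lemma pdeg_mul f g d1 d2 : pdeg f d1 -> pdeg g d2 -> pdeg (fun x => f x * g x) (d1 + d2).
Proof.
  intros [cs [H1 H2]] Hg.
  apply pdeg_ext with (fun x => peval cs x * g x). intros; rewrite H2; auto.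
  clear H2 f. revert d1 H1. induction cs as [|c cs IH]; intros d1 H1.
  - simpl. apply pdeg_ext with (fun _ => 0). intros; ring. apply pdeg_zero.
  - destruct d1 as [|d1].
    + destruct cs; simpl in H1; [|lia]. simpl.
      apply pdeg_ext with (fun x => c * g x). intros; ring. now apply pdeg_scal.
    + simpl in H1. apply pdeg_ext with (fun x => c * g x + x * (peval cs x * g x)).
      intros; simpl; ring.
      apply pdeg_add. apply pdeg_mono with d2. lia. now apply pdeg_scal.
      replace (S d1 + d2)%nat with (S (d1 + d2)) by lia. apply pdeg_mulX. apply IH. lia.
Qed.

Lemma pdeg_lin a : pdeg (fun x => x - a) 1.
Proof.
  apply pdeg_sub. apply pdeg_ext with (fun x => x * 1). intros; ring. apply pdeg_mulX, pdeg_const.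
  apply pdeg_mono with 0%nat. lia. apply pdeg_const.
Qed.

Lemma pdeg_pow j : pdeg (fun x => x ^ j) j.
Proof.
  induction j. simpl. apply pdeg_const. simpl. now apply pdeg_mulX.
Qed.

Lemma peval_cont cs x : continuous (peval cs) x.
Proof.
  induction cs as [|c cs IH]; simpl.
  - apply continuous_const.
  - apply (continuous_plus (fun _ => c) (fun x => x * peval cs x)).
    apply continuous_const. apply (continuous_mult (fun x => x) (peval cs)).
    apply continuous_id. auto.
Qed.

Lemma pdeg_cont f d x : pdeg f d -> continuous f x.
Proof.
  intros [cs [H1 H2]]. apply continuous_ext with (peval cs). intros; auto.
  apply peval_cont.
Qed.

Lemma pdeg_ex_RInt f d a b : pdeg f d -> ex_RInt f a b.
Proof. intros H. apply (ex_RInt_continuous (V:=R_CompleteNormedModule)). intros; eapply pdeg_cont; eauto. Qed.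

Lemma synth_div cs a : exists g, (length g <= pred (length cs))%nat /\
  forall x, peval cs x = (x - a) * peval g x + peval cs a.
Proof.
  induction cs as [|c cs IH].
  - exists nil; split; simpl; auto. intros; ring.
  - destruct cs as [|c' cs'].
    + exists nil; split; simpl; auto. intros; ring.
    + destruct IH as [g [H1 H2]]. exists (peval (c' :: cs') a :: g); split.
      simpl in *; lia.
      intro x. change (peval (c :: c' :: cs') x) with (c + x * peval (c' :: cs') x).
      change (peval (c :: c' :: cs') a) with (c + a * peval (c' :: cs') a).
      rewrite (H2 x). simpl; ring.
Qed.

Lemma pdeg_factor f d a : pdeg f (S d) -> f a = 0 ->
  exists g, pdeg g d /\ forall x, f x = (x - a) * g x.
Proof.
  intros [cs [H1 H2]] Ha. destruct (synth_div cs a) as [g [H3 H4]].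
  exists (peval g); split. exists g; split; auto; lia.
  intro x. rewrite H2, H4, <- H2, Ha; ring.
Qed.

Lemma pdeg0_root f a : pdeg f 0 -> f a = 0 -> forall x, f x = 0.
Proof.
  intros [cs [H1 H2]] Ha x. rewrite H2 in *. destruct cs as [|c [|c' cs]]; simpl in *; try lia.
  auto. lra.
Qed.

Definition prodl (l : list R) (x : R) : R := fold_right (fun a acc => (x - a) * acc) 1 l.

Lemma pdeg_prodl l : pdeg (prodl l) (length l).
Proof.
  induction l as [|a l IH]; simpl. apply pdeg_const.
  replace (S (length l)) with (1 + length l)%nat by lia.
  apply (pdeg_mul (fun x => x - a) (prodl l)). apply pdeg_lin. auto.
Qed.

Lemma factor_many l : NoDup l -> forall f d, (forall a, In a l -> f a = 0) ->
  pdeg f (length l + d) -> exists g, pdeg g d /\ forall x, f x = prodl l x * g x.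
Proof.
  induction l as [|a l IH]; intros Hnd f d Hz Hf.
  - exists f; split; auto. intros; simpl; ring.
  - inversion Hnd; subst. simpl in Hf.
    destruct (pdeg_factor f (length l + d) a Hf (Hz a (or_introl eq_refl))) as [g1 [Hg1 Eg1]].
    destruct (IH H2 g1 d) as [g [Hg Eg]]; auto.
    intros b Hb. assert (Hfb := Hz b (or_intror Hb)). rewrite Eg1 in Hfb.
    assert (b - a <> 0). intro. assert (b = a) by lra. subst; auto.
    apply Rmult_integral in Hfb. destruct Hfb; auto. contradiction.
    exists g; split; auto. intro x. rewrite Eg1, Eg. simpl; ring.
Qed.

Definition L (f : R -> R) : R := / 2 * RInt f (-1) 1.

Definition exRI (f : R -> R) := ex_RInt f (-1) 1.

Lemma pdeg_exRI f d : pdeg f d -> exRI f.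
Proof. apply pdeg_ex_RInt. Qed.

Lemma L_ext f g : (forall x, f x = g x) -> L f = L g.
Proof. intro H; unfold L; f_equal; apply RInt_ext; auto. Qed.

Lemma L_plus f g : exRI f -> exRI g -> L (fun x => f x + g x) = L f + L g.
Proof.
  intros Hf Hg; unfold L.
  assert (E : RInt (fun x => f x + g x) (-1) 1 = RInt f (-1) 1 + RInt g (-1) 1)
    by exact (RInt_plus f g (-1) 1 Hf Hg).
  rewrite E; ring.
Qed.

Lemma L_scal a f : exRI f -> L (fun x => a * f x) = a * L f.
Proof.
  intros Hf; unfold L.
  assert (E : RInt (fun x => a * f x) (-1) 1 = a * RInt f (-1) 1)
    by exact (RInt_scal f (-1) 1 a Hf).
  rewrite E; ring.
Qed.

Lemma L_minus f g : exRI f -> exRI g -> L (fun x => f x - g x) = L f - L g.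
Proof.
  intros Hf Hg; unfold L.
  assert (E : RInt (fun x => f x - g x) (-1) 1 = RInt f (-1) 1 - RInt g (-1) 1)
    by exact (RInt_minus f g (-1) 1 Hf Hg).
  rewrite E; ring.
Qed.

Lemma exRI_plus f g : exRI f -> exRI g -> exRI (fun x => f x + g x).
Proof. intros; apply (ex_RInt_plus f g); auto. Qed.

Lemma exRI_scal a f : exRI f -> exRI (fun x => a * f x).
Proof. intros; apply (ex_RInt_scal f); auto. Qed.

Definition sumi (f : nat -> R) (l : list nat) : R := fold_right (fun i acc => f i + acc) 0 l.

Lemma L_sumi (F : nat -> R -> R) l : (forall i, exRI (F i)) ->
  L (fun x => sumi (fun i => F i x) l) = sumi (fun i => L (F i)) l.
Proof.
  intro H. induction l as [|i l IH]; simpl.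
  - unfold L. rewrite RInt_const. unfold scal; simpl; unfold mult; simpl; ring.
  - rewrite L_plus; auto. rewrite IH; auto.
    clear IH. induction l as [|j l IH]; simpl.
    apply (ex_RInt_const (-1) 1 0). apply exRI_plus; auto.
Qed.

Lemma pdeg_sumi (F : nat -> R -> R) l d : (forall i, In i l -> pdeg (F i) d) ->
  pdeg (fun x => sumi (fun i => F i x) l) d.
Proof.
  induction l as [|i l IH]; intro H; simpl. apply pdeg_zero.
  apply pdeg_add. apply H; simpl; auto. apply IH; intros; apply H; simpl; auto.
Qed.

Lemma sumi_ext f g l : (forall i, In i l -> f i = g i) -> sumi f l = sumi g l.
Proof. induction l; simpl; intros; auto. rewrite H, IHl; auto. Qed.

Lemma sumi_single f l k : NoDup l -> In k l -> (forall i, In i l -> i <> k -> f i = 0) -> sumi f l = f k.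
Proof.
  induction l as [|i l IH]; intros Hnd Hk Hz; simpl in *. contradiction.
  inversion Hnd; subst. destruct Hk as [->|Hk].
  - assert (E : sumi f l = sumi (fun _ => 0) l).
    { apply sumi_ext. intros j Hj. apply Hz; auto. intro; subst; contradiction. }
    rewrite E. clear. induction l; simpl; try lra.
  - rewrite Hz; auto. rewrite IH; auto. ring. intro; subst; contradiction.
Qed.

Lemma sumi_nonneg f l : (forall i, In i l -> 0 <= f i) -> 0 <= sumi f l.
Proof. induction l; simpl; intros; try lra. assert (0 <= f a) by auto. assert (0 <= sumi f l) by auto. lra. Qed.

Lemma sumi_ge f l k : (forall i, In i l -> 0 <= f i) -> In k l -> f k <= sumi f l.
Proof.
  induction l as [|i l IH]; simpl; intros H Hk. contradiction.
  destruct Hk as [->|Hk].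
  assert (0 <= sumi f l) by (apply sumi_nonneg; auto). lra.
  assert (0 <= f i) by auto. assert (f k <= sumi f l) by auto. lra.
Qed.

Lemma leg_snd k x : snd (legendre_pair k x) = legendre (S k) x.
Proof. unfold legendre; simpl. destruct (legendre_pair k x); reflexivity. Qed.

Lemma leg0 x : legendre 0 x = 1.
Proof. reflexivity. Qed.

Lemma leg1 x : legendre 1 x = x.
Proof. reflexivity. Qed.

Lemma leg_rec k x : legendre (S (S k)) x =
  ((2 * INR k + 3) * x * legendre (S k) x - (INR k + 1) * legendre k x) / (INR k + 2).
Proof.
  rewrite <- (leg_snd (S k)). rewrite <- (leg_snd k).
  unfold legendre. simpl. destruct (legendre_pair k x) as [p q]. simpl. reflexivity.
Qed.

Lemma leg_pdeg k : pdeg (legendre k) k /\ pdeg (legendre (S k)) (S k).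
Proof.
  induction k as [|k [IH1 IH2]].
  - split. apply pdeg_ext with (fun _ => 1). intros; auto. apply pdeg_const.
    apply pdeg_ext with (fun x => x * 1). intros; rewrite leg1; ring. apply pdeg_mulX, pdeg_const.
  - split; auto.
    apply pdeg_ext with (fun x => (/(INR k + 2) * (2 * INR k + 3)) * (x * legendre (S k) x)
       - (/(INR k + 2) * (INR k + 1)) * legendre k x).
    intro x; rewrite leg_rec. field. pose proof (pos_INR k); lra.
    apply pdeg_sub. apply pdeg_scal. apply pdeg_mulX; auto.
    apply pdeg_mono with k. lia. apply pdeg_scal; auto.
Qed.

Lemma leg_one k : legendre k 1 = 1 /\ legendre (S k) 1 = 1.
Proof.
  induction k as [|k [IH1 IH2]]. split; reflexivity.
  split; auto. rewrite leg_rec, IH1, IH2. field. pose proof (pos_INR k); lra.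
Qed.

Lemma leg_par k x : legendre k (-x) = (-1)^k * legendre k x /\
                    legendre (S k) (-x) = (-1)^(S k) * legendre (S k) x.
Proof.
  induction k as [|k [IH1 IH2]]. simpl; split; [rewrite !leg0|rewrite !leg1]; ring.
  split; auto. rewrite !leg_rec, IH1, IH2. simpl. field. pose proof (pos_INR k); lra.
Qed.

Definition mu (j : nat) : R := if Nat.even j then / (INR j + 1) else 0.

Lemma RInt_pow j : (RInt (fun x => x ^ j) (-1) 1 : R) = 2 * mu j.
Proof.
  assert (H1 : forall x, Rmin (-1) 1 <= x <= Rmax (-1) 1 ->
     is_derive (fun x => / INR (S j) * x ^ (S j)) x (x ^ j)).
  { intros x _.
    assert (H := is_derive_scal (fun x => x ^ (S j)) x (/ INR (S j)) _
                  (is_derive_pow (fun y => y) (S j) x 1 (is_derive_id x))).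
    replace (x ^ j) with (/ INR (S j) * (INR (S j) * 1 * x ^ Init.Nat.pred (S j))). exact H.
    simpl pred. field. apply not_0_INR; lia. }
  assert (H2 : forall x, Rmin (-1) 1 <= x <= Rmax (-1) 1 -> continuous (fun x => x ^ j) x).
  { intros; apply (pdeg_cont _ j), pdeg_pow. }
  assert (HI := is_RInt_derive (V:=R_CompleteNormedModule) _ _ _ _ H1 H2).
  assert (E : RInt (fun x => x ^ j) (-1) 1 = / INR (S j) * 1 ^ (S j) - / INR (S j) * (-1) ^ (S j))
    by exact (is_RInt_unique _ _ _ _ HI).
  rewrite E.
  unfold mu. rewrite pow1. rewrite S_INR.
  destruct (Nat.Even_or_Odd j) as [[m ->]|[m ->]].
  - rewrite Nat.even_mul; cbn [Nat.even orb]. rewrite pow_1_odd. field. pose proof (pos_INR (2*m)); lra.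
  - replace (2 * m + 1)%nat with (S (2 * m)) by lia. rewrite Nat.even_succ, Nat.odd_mul.
    cbn [Nat.odd Nat.even negb andb]. replace (S (S (2 * m))) with (2 * S m)%nat by lia. rewrite pow_1_even.
    cbn [andb]. field. pose proof (pos_INR (S (2*m))); lra.
Qed.

Definition Mform (k s : nat) : R :=
  2 ^ k * INR (fact (k + 2 * s)) * INR (fact (k + s)) /
  (INR (fact s) * INR (fact (2 * k + 2 * s + 1))).

Definition Mc (k j : nat) : R :=
  if (j <? k)%nat then 0 else if Nat.even (j - k) then Mform k ((j - k) / 2) else 0.

Lemma Mc_lt k j : (j < k)%nat -> Mc k j = 0.
Proof. intro H; unfold Mc. apply Nat.ltb_lt in H; rewrite H; auto. Qed.

Lemma Mc_ev k j s : j = (k + 2 * s)%nat -> Mc k j = Mform k s.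
Proof.
  intros ->; unfold Mc. replace (k + 2 * s <? k)%nat with false.
  replace (k + 2 * s - k)%nat with (2 * s)%nat by lia.
  rewrite Nat.even_mul; cbn [Nat.even orb]. f_equal. rewrite Nat.mul_comm, Nat.div_mul; auto.
  symmetry; apply Nat.ltb_ge; lia.
Qed.

Lemma Mc_od k j s : j = (k + 2 * s + 1)%nat -> Mc k j = 0.
Proof.
  intros ->; unfold Mc. replace (k + 2 * s + 1 <? k)%nat with false.
  replace (k + 2 * s + 1 - k)%nat with (S (2 * s))%nat by lia.
  rewrite Nat.even_succ, Nat.odd_mul; cbn [Nat.odd Nat.even negb andb]. auto.
  symmetry; apply Nat.ltb_ge; lia.
Qed.

Lemma nat_cases k j : (j < k)%nat \/ exists s, j = (k + 2 * s)%nat \/ j = (k + 2 * s + 1)%nat.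
Proof.
  destruct (Nat.lt_ge_cases j k) as [H|H]; [left; auto|right].
  destruct (Nat.Even_or_Odd (j - k)) as [[s Hs]|[s Hs]]; exists s; lia.
Qed.

Lemma factS' n m : m = S n -> INR (fact m) = INR m * INR (fact n).
Proof. intros ->. change (fact (S n)) with (S n * fact n)%nat. rewrite mult_INR. auto. Qed.

Lemma factSS' n m : m = S (S n) -> INR (fact m) = INR m * INR (S n) * INR (fact n).
Proof. intros ->. rewrite (factS' (S n)), (factS' n (S n)); auto. ring. Qed.

Lemma Mc0 j : Mc 0 j = mu j.
Proof.
  destruct (nat_cases 0 j) as [H|[s [H|H]]]. lia.
  - rewrite (Mc_ev 0 j s H). unfold mu, Mform. subst j.
    replace (0 + 2 * s)%nat with (2 * s)%nat by lia.
    rewrite Nat.even_mul; cbn [Nat.even orb].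
    replace (0 + s)%nat with s by lia.
    rewrite (factS' (2 * s) (2 * 0 + 2 * s + 1)) by lia.
    replace (2 * 0 + 2 * s + 1)%nat with (S (2 * s)) by lia.
    rewrite S_INR. rewrite pow_O. field.
    pose proof (INR_fact_neq_0 s). pose proof (INR_fact_neq_0 (2 * s)). pose proof (pos_INR (2 * s)).
    repeat split; auto; lra.
  - rewrite (Mc_od 0 j s H). unfold mu. subst j.
    replace (0 + 2 * s + 1)%nat with (S (2 * s)) by lia.
    rewrite Nat.even_succ, Nat.odd_mul; cbn [Nat.odd Nat.even negb andb]. auto.
Qed.

Ltac inr_simpl := repeat rewrite ?plus_INR, ?mult_INR, ?S_INR, ?INR_0.

Lemma Mc1 j : Mc 1 j = mu (S j).
Proof.
  destruct (nat_cases 1 j) as [H|[s [H|H]]].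
  - rewrite Mc_lt; auto. replace j with 0%nat by lia. reflexivity.
  - rewrite (Mc_ev 1 j s H). unfold mu, Mform. subst j.
    replace (S (1 + 2 * s)) with (2 * S s)%nat by lia.
    rewrite Nat.even_mul; cbn [Nat.even orb].
    rewrite (factS' s (1 + s)) by lia.
    rewrite (factSS' (1 + 2 * s) (2 * 1 + 2 * s + 1)) by lia.
    pose proof (INR_fact_neq_0 s). pose proof (INR_fact_neq_0 (1 + 2 * s)).
    set (A := INR (fact s)) in *. set (B := INR (fact (1 + 2 * s))) in *.
    inr_simpl. pose proof (pos_INR s). field. repeat split; auto; lra.
  - rewrite (Mc_od 1 j s H). unfold mu. subst j.
    replace (S (1 + 2 * s + 1))%nat with (S (2 * S s)) by lia.
    rewrite Nat.even_succ, Nat.odd_mul; cbn [Nat.odd Nat.even negb andb]. auto.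
Qed.

Lemma Mc_rec k j : (INR k + 2) * Mc (S (S k)) j =
   (2 * INR k + 3) * Mc (S k) (S j) - (INR k + 1) * Mc k j.
Proof.
  destruct (nat_cases k j) as [H|[s [H|H]]].
  - rewrite !Mc_lt by lia. ring.
  - destruct s as [|s].
    + rewrite (Mc_lt (S (S k))) by lia. rewrite (Mc_ev (S k) (S j) 0) by lia.
      rewrite (Mc_ev k j 0) by lia. unfold Mform.
      replace (S k + 2 * 0)%nat with (S k) by lia. replace (S k + 0)%nat with (S k) by lia.
      replace (k + 2 * 0)%nat with k by lia. replace (k + 0)%nat with k by lia.
      replace (2 * k + 2 * 0 + 1)%nat with (2 * k + 1)%nat by lia.
      rewrite (factSS' (2 * k + 1) (2 * S k + 2 * 0 + 1)) by lia.
      rewrite (factS' k (S k)) by lia.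
      pose proof (INR_fact_neq_0 k). pose proof (INR_fact_neq_0 (2 * k + 1)).
      set (A := INR (fact k)) in *. set (B := INR (fact (2 * k + 1))) in *.
      change (INR (fact 0)) with 1. change (2 ^ S k) with (2 * 2 ^ k).
      inr_simpl. pose proof (pos_INR k). field. repeat split; auto; lra.
    + rewrite (Mc_ev (S (S k)) j s) by lia. rewrite (Mc_ev (S k) (S j) (S s)) by lia.
      rewrite (Mc_ev k j (S s)) by lia. unfold Mform.
      replace (S (S k) + 2 * s)%nat with (k + 2 * s + 2)%nat by lia.
      replace (k + 2 * S s)%nat with (k + 2 * s + 2)%nat by lia.
      rewrite (factS' (k + s + 1) (S (S k) + s)) by lia.
      rewrite (factS' (k + s + 1) (S k + S s)) by lia.
      replace (k + S s)%nat with (k + s + 1)%nat by lia.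
      rewrite (factS' s (S s)) by lia.
      rewrite (factSS' (2 * k + 2 * s + 3) (2 * S (S k) + 2 * s + 1)) by lia.
      rewrite (factSS' (2 * k + 2 * s + 3) (2 * S k + 2 * S s + 1)) by lia.
      replace (2 * k + 2 * S s + 1)%nat with (2 * k + 2 * s + 3)%nat by lia.
      rewrite (factS' (k + 2 * s + 2) (S k + 2 * S s)) by lia.
      pose proof (INR_fact_neq_0 s). pose proof (INR_fact_neq_0 (k + s + 1)).
      pose proof (INR_fact_neq_0 (k + 2 * s + 2)). pose proof (INR_fact_neq_0 (2 * k + 2 * s + 3)).
      set (A := INR (fact s)) in *. set (B := INR (fact (k + s + 1))) in *.
      set (C := INR (fact (k + 2 * s + 2))) in *. set (D := INR (fact (2 * k + 2 * s + 3))) in *.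
      change (2 ^ S (S k)) with (2 * (2 * 2 ^ k)). change (2 ^ S k) with (2 * 2 ^ k).
      inr_simpl. pose proof (pos_INR k). pose proof (pos_INR s).
      field. repeat split; auto; lra.
  - rewrite (Mc_od k j s) by lia. rewrite (Mc_od (S k) (S j) s) by lia.
    destruct s as [|s]. rewrite (Mc_lt (S (S k))) by lia. ring.
    rewrite (Mc_od (S (S k)) j s) by lia. ring.
Qed.

Lemma L0 : L (fun _ => 0) = 0.
Proof. unfold L. rewrite RInt_const. unfold scal; simpl; unfold mult; simpl; ring. Qed.

Lemma L_pow j : L (fun x => x ^ j) = mu j.
Proof. unfold L. rewrite RInt_pow. field. Qed.

Lemma exRI_legpow k j : exRI (fun x => legendre k x * x ^ j).
Proof. eapply pdeg_exRI. apply pdeg_mul. apply leg_pdeg. apply pdeg_pow. Qed.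

Lemma A_eq k j : L (fun x => legendre k x * x ^ j) = Mc k j.
Proof.
  assert (H : forall k, (forall j, L (fun x => legendre k x * x ^ j) = Mc k j) /\
                        (forall j, L (fun x => legendre (S k) x * x ^ j) = Mc (S k) j)).
  { induction k0 as [|k0 [IH1 IH2]].
    - split; intro j0.
      + rewrite Mc0, <- L_pow. apply L_ext. intro; rewrite leg0; ring.
      + rewrite Mc1, <- L_pow. apply L_ext. intro; rewrite leg1; simpl; ring.
    - split; auto. intro j0.
      pose proof (pos_INR k0).
      assert (X1 := exRI_legpow (S k0) (S j0)). assert (X2 := exRI_legpow k0 j0).
      assert (X3 := exRI_scal ((2 * INR k0 + 3) / (INR k0 + 2)) _ X1).
      assert (X4 := exRI_scal ((INR k0 + 1) / (INR k0 + 2)) _ X2).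
      rewrite (L_ext _ (fun x => ((2 * INR k0 + 3) / (INR k0 + 2)) * (legendre (S k0) x * x ^ (S j0))
                       - ((INR k0 + 1) / (INR k0 + 2)) * (legendre k0 x * x ^ j0))).
      rewrite L_minus, !L_scal, IH1, IH2. 
      pose proof (Mc_rec k0 j0) as E.
      set (m2 := Mc (S (S k0)) j0) in *. set (m1 := Mc (S k0) (S j0)) in *. set (m0 := Mc k0 j0) in *.
      apply Rmult_eq_reg_l with (INR k0 + 2). rewrite E. field. lra. lra.
      all: try assumption.
      intro x. rewrite leg_rec. simpl pow.
      set (P := legendre (S k0) x). set (Q := legendre k0 x). field; lra. }
  exact (proj1 (H k) j).
Qed.

Lemma leg_orth_pow k j : (j < k)%nat -> L (fun x => legendre k x * x ^ j) = 0.
Proof. intro; rewrite A_eq; apply Mc_lt; auto. Qed.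

Lemma leg_orth_cs k cs : forall j, (j + length cs <= k)%nat ->
  L (fun x => legendre k x * (x ^ j * peval cs x)) = 0.
Proof.
  induction cs as [|c cs IH]; intros j Hj; simpl in *.
  - transitivity (L (fun _ => 0)); [apply L_ext; intro; ring | apply L0].
  - rewrite (L_ext _ (fun x => c * (legendre k x * x ^ j) + legendre k x * (x ^ (S j) * peval cs x))).
    rewrite L_plus, L_scal, leg_orth_pow, IH; try lia; try ring.
    apply exRI_legpow. apply exRI_scal, exRI_legpow.
    apply (pdeg_exRI _ (k + (S j + length cs))). apply pdeg_mul. apply leg_pdeg. apply pdeg_mul. apply pdeg_pow.
    exists cs; split; [lia | intros; reflexivity].
    intro x; simpl; ring.
Qed.

Lemma leg_orth k q d : pdeg q d -> (d < k)%nat -> L (fun x => legendre k x * q x) = 0.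
Proof.
  intros [cs [H1 H2]] Hd. rewrite <- (leg_orth_cs k cs 0); [|lia].
  apply L_ext; intro x; rewrite H2; simpl; ring.
Qed.

Definition Nodes (r : nat) (xs : list R) : Prop :=
  length xs = r /\ (forall i j, (i < j < r)%nat -> nth i xs 0 < nth j xs 0) /\
  (forall x, legendre r x = 0 <-> In x xs).

Lemma nodes_distinct r xs : Nodes r xs -> forall i j, (i < r)%nat -> (j < r)%nat -> i <> j ->
  nth i xs 0 <> nth j xs 0.
Proof.
  intros [_ [Hs _]] i j Hi Hj Hij.
  destruct (Nat.lt_gt_cases i j) as [[H|H] _]; auto.
  specialize (Hs i j ltac:(lia)); lra. specialize (Hs j i ltac:(lia)); lra.
Qed.

Lemma nodes_le r xs : Nodes r xs -> forall i j, (i <= j < r)%nat -> nth i xs 0 <= nth j xs 0.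
Proof.
  intros [_ [Hs _]] i j Hij. destruct (Nat.eq_dec i j) as [->|]. lra.
  left; apply Hs; lia.
Qed.

Lemma nodes_NoDup r xs : Nodes r xs -> NoDup xs.
Proof.
  intros H. apply (NoDup_nth xs 0). intros i j Hi Hj E.
  assert (Hl := proj1 H). rewrite Hl in *.
  destruct (Nat.eq_dec i j); auto. exfalso; eapply (nodes_distinct r xs H i j); eauto.
Qed.

Lemma pdeg0_const g : pdeg g 0 -> forall x, g x = g 0.
Proof.
  intros [cs [H1 H2]] x. rewrite !H2. destruct cs as [|c [|c' cs]]; simpl in *; try lia; lra.
Qed.

Lemma nodes_omega r xs : Nodes r xs -> exists c, c <> 0 /\ forall x, legendre r x = c * prodl xs x.
Proof.
  intros H. assert (Hnd := nodes_NoDup r xs H). destruct H as [Hl [_ Hz]].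
  destruct (factor_many xs Hnd (legendre r) 0) as [g [Hg Eg]].
  intros a Ha; apply Hz; auto. rewrite Hl, Nat.add_0_r. apply leg_pdeg.
  exists (g 0); split.
  - intro E. assert (H1 := proj1 (leg_one r)). rewrite Eg, (pdeg0_const g Hg), E in H1. lra.
  - intro x. rewrite Eg, (pdeg0_const g Hg x). ring.
Qed.

Lemma orth_omega r xs q d : Nodes r xs -> pdeg q d -> (d < r)%nat ->
  L (fun x => prodl xs x * q x) = 0.
Proof.
  intros H Hq Hd. destruct (nodes_omega r xs H) as [c [Hc Ec]].
  rewrite (L_ext _ (fun x => / c * (legendre r x * q x))).
  rewrite L_scal, (leg_orth r q d); auto. ring.
  eapply pdeg_exRI. apply pdeg_mul. apply leg_pdeg. eauto.
  intro x. rewrite Ec. field; auto.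
Qed.

Definition lagF (xs : list R) (i : nat) (l : list nat) (x : R) : R :=
  fold_right
    (fun j acc => if Nat.eqb j i then acc
       else (x - nth j xs 0) / (nth i xs 0 - nth j xs 0) * acc) 1 l.

Lemma lagrange_F xs i x : lagrange xs i x = lagF xs i (seq 0 (length xs)) x.
Proof. reflexivity. Qed.

Lemma pdeg_lin_scal a b : pdeg (fun x => (x - a) / b) 1.
Proof.
  apply pdeg_ext with (fun x => / b * (x - a)). intros; unfold Rdiv; ring.
  apply pdeg_scal, pdeg_lin.
Qed.

Lemma lagF_cons xs i j l x : lagF xs i (j :: l) x =
  if Nat.eqb j i then lagF xs i l x
  else (x - nth j xs 0) / (nth i xs 0 - nth j xs 0) * lagF xs i l x.
Proof. reflexivity. Qed.

Lemma lagF_nil xs i x : lagF xs i nil x = 1.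
Proof. reflexivity. Qed.

Lemma lagF_deg_out xs i l : ~ In i l -> pdeg (lagF xs i l) (length l).
Proof.
  induction l as [|j l IH]; intros Hi.
  apply pdeg_ext with (fun _ => 1). intros; rewrite lagF_nil; auto. apply pdeg_const.
  destruct (Nat.eqb_spec j i). subst; exfalso; apply Hi; simpl; auto.
  apply pdeg_ext with (fun x => (x - nth j xs 0) / (nth i xs 0 - nth j xs 0) * lagF xs i l x).
  intros; rewrite lagF_cons. destruct (Nat.eqb_spec j i); [contradiction|auto].
  simpl length. replace (S (length l)) with (1 + length l)%nat by lia.
  apply (pdeg_mul (fun x => (x - nth j xs 0) / (nth i xs 0 - nth j xs 0)) (lagF xs i l)).
  apply pdeg_lin_scal. apply IH. intro; apply Hi; simpl; auto.
Qed.

Lemma lagF_deg_in xs i l : NoDup l -> In i l -> pdeg (lagF xs i l) (pred (length l)).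
Proof.
  induction l as [|j l IH]; intros Hnd Hi; simpl in Hi. contradiction.
  inversion Hnd; subst.
  destruct (Nat.eqb_spec j i).
  - subst. apply pdeg_ext with (lagF xs i l). intros; rewrite lagF_cons, Nat.eqb_refl; auto.
    apply lagF_deg_out; auto.
  - destruct Hi as [Hi|Hi]. contradiction.
    apply pdeg_ext with (fun x => (x - nth j xs 0) / (nth i xs 0 - nth j xs 0) * lagF xs i l x).
    intros; rewrite lagF_cons. destruct (Nat.eqb_spec j i); [contradiction|auto].
    destruct l as [|j' l']. contradiction.
    replace (pred (length (j :: j' :: l'))) with (1 + pred (length (j' :: l')))%nat by (simpl; lia).
    apply (pdeg_mul (fun x => (x - nth j xs 0) / (nth i xs 0 - nth j xs 0)) (lagF xs i (j' :: l'))).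
    apply pdeg_lin_scal. apply IH; auto.
Qed.

Lemma lagF_other xs i l k : In k l -> k <> i -> lagF xs i l (nth k xs 0) = 0.
Proof.
  induction l as [|j l IH]; intros Hk Hki; simpl in Hk. contradiction.
  rewrite lagF_cons. destruct (Nat.eqb_spec j i).
  - destruct Hk as [->|Hk]. contradiction. auto.
  - destruct Hk as [->|Hk]. unfold Rdiv; ring. rewrite IH; auto. ring.
Qed.

Lemma lagF_self xs i l : (forall j, In j l -> j <> i -> nth i xs 0 <> nth j xs 0) ->
  lagF xs i l (nth i xs 0) = 1.
Proof.
  induction l as [|j l IH]; intros H. auto.
  rewrite lagF_cons. destruct (Nat.eqb_spec j i). apply IH; intros; apply H; simpl; auto.
  rewrite IH. field. intro E. apply (H j); simpl; auto. lra.
  intros; apply H; simpl; auto.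
Qed.

Lemma lagF_nz xs i l x : (forall j, In j l -> j <> i -> nth i xs 0 <> nth j xs 0) ->
  (forall j, In j l -> j <> i -> x <> nth j xs 0) -> lagF xs i l x <> 0.
Proof.
  induction l as [|j l IH]; intros H1 H2. rewrite lagF_nil; lra.
  rewrite lagF_cons. destruct (Nat.eqb_spec j i). apply IH; intros; [apply H1|apply H2]; simpl; auto.
  apply Rmult_integral_contrapositive; split.
  - unfold Rdiv. apply Rmult_integral_contrapositive; split.
    intro E; apply (H2 j); simpl; auto; lra. apply Rinv_neq_0_compat. intro E; apply (H1 j); simpl; auto; lra.
  - apply IH; intros; [apply H1|apply H2]; simpl; auto.
Qed.

Lemma lag_deg r xs i : Nodes r xs -> (i < r)%nat -> pdeg (lagrange xs i) (r - 1).
Proof.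
  intros H Hi. apply pdeg_ext with (lagF xs i (seq 0 (length xs))). intros; auto.
  replace (r - 1)%nat with (pred (length (seq 0 (length xs)))).
  apply lagF_deg_in. apply seq_NoDup. apply in_seq. destruct H as [-> _]; lia.
  rewrite length_seq. destruct H as [-> _]; lia.
Qed.

Lemma lag_self r xs i : Nodes r xs -> (i < r)%nat -> lagrange xs i (nth i xs 0) = 1.
Proof.
  intros H Hi. rewrite lagrange_F. apply lagF_self. intros j Hj Hji.
  apply in_seq in Hj. apply (nodes_distinct r xs H); auto. destruct H as [<- _]; lia.
Qed.

Lemma lag_other r xs i k : Nodes r xs -> (k < r)%nat -> k <> i -> lagrange xs i (nth k xs 0) = 0.
Proof.
  intros H Hk Hki. rewrite lagrange_F. apply lagF_other; auto. apply in_seq.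
  destruct H as [-> _]; lia.
Qed.

Lemma weight_L xs i : gl_weight xs i = L (lagrange xs i).
Proof. reflexivity. Qed.

Lemma gauss r xs f : Nodes r xs -> (1 <= r)%nat -> pdeg f (2 * r - 1) ->
  L f = sumi (fun i => gl_weight xs i * f (nth i xs 0)) (seq 0 r).
Proof.
  intros H Hr Hf.
  set (s := fun x => sumi (fun i => f (nth i xs 0) * lagrange xs i x) (seq 0 r)).
  assert (Hs : pdeg s (r - 1)).
  { apply pdeg_sumi. intros i Hi. apply in_seq in Hi. apply pdeg_scal. apply lag_deg; auto; lia. }
  assert (Ls : L s = sumi (fun i => gl_weight xs i * f (nth i xs 0)) (seq 0 r)).
  { unfold s. rewrite (L_sumi (fun i x => f (nth i xs 0) * lagrange xs i x)).
    apply sumi_ext. intros i Hi. rewrite L_scal, weight_L. ring.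
    apply in_seq in Hi. eapply pdeg_exRI; apply lag_deg; eauto; lia.
    intro i. destruct (Nat.lt_ge_cases i r) as [Hi|Hi].
    apply exRI_scal. eapply pdeg_exRI; apply lag_deg; eauto.
    (* out of range: lagrange is still a polynomial *)
    apply exRI_scal. eapply pdeg_exRI. apply pdeg_ext with (lagF xs i (seq 0 (length xs))). intros; auto.
    apply lagF_deg_out. rewrite in_seq. destruct H as [-> _]; lia. }
  assert (Hsk : forall k, (k < r)%nat -> s (nth k xs 0) = f (nth k xs 0)).
  { intros k Hk. unfold s. rewrite (sumi_single _ _ k). rewrite (lag_self r); auto. ring.
    apply seq_NoDup. apply in_seq; lia.
    intros i Hi Hik. apply in_seq in Hi. rewrite (lag_other r xs i k); auto. ring. }
  destruct (factor_many xs (nodes_NoDup r xs H) (fun x => f x - s x) (r - 1)) as [g [Hg Eg]].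
  - intros a Ha. destruct (In_nth xs a 0 Ha) as [k [Hk <-]].
    destruct H as [Hl _]. rewrite Hl in Hk. rewrite Hsk; auto; ring.
  - destruct H as [Hl _]. rewrite Hl. apply pdeg_sub. apply (pdeg_mono f (2 * r - 1)); auto; lia.
    apply (pdeg_mono s (r - 1)); auto; lia.
  - rewrite <- Ls.
    rewrite (L_ext f (fun x => s x + (f x - s x))) by (intros; ring).
    rewrite L_plus. rewrite (L_ext (fun x => f x - s x) (fun x => prodl xs x * g x)) by auto.
    rewrite (orth_omega r xs g (r - 1)); auto. ring. lia.
    eapply pdeg_exRI; eauto. apply (pdeg_exRI _ (2 * r - 1)). apply pdeg_sub; auto.
    apply (pdeg_mono s (r - 1)); auto; lia.
Qed.

Definition bfold (zs : list R) : R :=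
  fold_right (fun y acc => if Rlt_dec (-1) y then Rmin y acc else acc) 1 zs.

Lemma bfold_prop zs : -1 < bfold zs /\ bfold zs <= 1 /\
  forall y, In y zs -> -1 < y -> bfold zs <= y.
Proof.
  induction zs as [|z zs [H1 [H2 H3]]]; simpl. split; [lra|split; [lra|tauto]].
  destruct (Rlt_dec (-1) z).
  - split. apply Rmin_glb_lt; auto. split. eapply Rle_trans. apply Rmin_r. auto.
    intros y [->|Hy] Hy1. apply Rmin_l. eapply Rle_trans. apply Rmin_r. auto.
  - split; auto. split; auto. intros y [->|Hy] Hy1. contradiction. auto.
Qed.

Lemma exRI_gen (g : R -> R) a b : (forall x, continuous g x) -> ex_RInt g a b.
Proof. intro H. apply (ex_RInt_continuous (V:=R_CompleteNormedModule)). intros; auto. Qed.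

Lemma L_pos_fin g zs : (forall x, continuous g x) -> (forall x, 0 <= g x) ->
  (forall x, ~ In x zs -> 0 < g x) -> 0 < L g.
Proof.
  intros Hc H0 Hp. destruct (bfold_prop zs) as [B1 [B2 B3]]. set (b := bfold zs) in *.
  assert (E : RInt g (-1) b + RInt g b 1 = RInt g (-1) 1)
    by exact (RInt_Chasles g (-1) b 1 (exRI_gen g _ _ Hc) (exRI_gen g _ _ Hc)).
  assert (P1 : 0 < RInt g (-1) b).
  { apply RInt_gt_0; auto. intros x Hx. apply Hp. intro Hin.
    destruct (Rlt_dec (-1) x). assert (b <= x) by (apply B3; auto). lra. lra. }
  assert (P2 : 0 <= RInt g b 1).
  { apply RInt_ge_0; auto. apply exRI_gen; auto. }
  unfold L. rewrite <- E. lra.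
Qed.

Lemma L_nonneg f d : pdeg f d -> (forall x, -1 < x < 1 -> 0 <= f x) -> 0 <= L f.
Proof.
  intros Hf H. unfold L. apply Rmult_le_pos. lra. apply RInt_ge_0. lra.
  eapply pdeg_exRI; eauto. auto.
Qed.

Lemma weight_sq r xs i : Nodes r xs -> (1 <= r)%nat -> (i < r)%nat ->
  gl_weight xs i = L (fun x => lagrange xs i x * lagrange xs i x).
Proof.
  intros H Hr Hi. rewrite (gauss r xs); auto.
  rewrite (sumi_single _ _ i). rewrite (lag_self r) by (auto; lia). ring.
  apply seq_NoDup. apply in_seq; lia.
  intros k Hk Hki. apply in_seq in Hk. rewrite (lag_other r xs i k) by (auto; lia). ring.
  replace (2 * r - 1)%nat with ((r - 1) + (r - 1) + 1)%nat by lia.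
  apply pdeg_mono with ((r - 1) + (r - 1))%nat. lia.
  apply pdeg_mul; apply lag_deg; auto.
Qed.

Lemma weight_pos r xs i : Nodes r xs -> (1 <= r)%nat -> (i < r)%nat -> 0 < gl_weight xs i.
Proof.
  intros H Hr Hi. rewrite (weight_sq r xs i); auto.
  apply L_pos_fin with xs.
  - intro x. apply (pdeg_cont _ ((r - 1) + (r - 1))). apply pdeg_mul; apply lag_deg; auto.
  - intro x. apply Rle_0_sqr.
  - intros x Hx. assert (lagrange xs i x <> 0).
    { rewrite lagrange_F. apply lagF_nz.
      intros j Hj Hji. apply in_seq in Hj. apply (nodes_distinct r xs H); auto. destruct H as [<- _]; lia.
      intros j Hj Hji E. apply Hx. rewrite E. apply nth_In. apply in_seq in Hj. lia. }
    apply Rsqr_pos_lt; auto.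
Qed.

Lemma node_bound r xs i : Nodes r xs -> (1 <= r)%nat -> (i < r)%nat ->
  -1 <= nth i xs 0 <= 1.
Proof.
  intros H Hr Hi.
  set (l2 := fun x => lagrange xs i x * lagrange xs i x).
  assert (Hl2 : pdeg l2 ((r - 1) + (r - 1))) by (apply pdeg_mul; apply lag_deg; auto).
  assert (Hxl2 : pdeg (fun x => x * l2 x) (S ((r - 1) + (r - 1)))) by (apply pdeg_mulX; auto).
  assert (E : L (fun x => x * l2 x) = gl_weight xs i * nth i xs 0).
  { rewrite (gauss r xs); auto.
    rewrite (sumi_single _ _ i). unfold l2. rewrite (lag_self r) by (auto; lia). ring.
    apply seq_NoDup. apply in_seq; lia.
    intros k Hk Hki. apply in_seq in Hk. unfold l2. rewrite (lag_other r xs i k) by (auto; lia). ring.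
    apply pdeg_mono with (S ((r - 1) + (r - 1))); auto; lia. }
  assert (W := weight_sq r xs i H Hr Hi). fold l2 in W.
  assert (Wp := weight_pos r xs i H Hr Hi).
  assert (A1 : 0 <= L (fun x => l2 x - x * l2 x)).
  { apply (L_nonneg _ (S ((r - 1) + (r - 1)))). apply pdeg_sub; auto. apply pdeg_mono with ((r-1)+(r-1))%nat; auto.
    intros x Hx. unfold l2. assert (0 <= lagrange xs i x * lagrange xs i x) by apply Rle_0_sqr. nra. }
  assert (A2 : 0 <= L (fun x => l2 x + x * l2 x)).
  { apply (L_nonneg _ (S ((r - 1) + (r - 1)))). apply pdeg_add; auto. apply pdeg_mono with ((r-1)+(r-1))%nat; auto.
    intros x Hx. unfold l2. assert (0 <= lagrange xs i x * lagrange xs i x) by apply Rle_0_sqr. nra. }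
  rewrite L_minus in A1. rewrite L_plus in A2. rewrite E, <- W in *.
  split; nra.
  all: eapply pdeg_exRI; eauto.
Qed.

Lemma map_nth_seq (l : list R) : map (fun i => nth i l 0) (seq 0 (length l)) = l.
Proof.
  induction l as [|a l IH]; simpl; auto. f_equal.
  rewrite <- seq_shift, map_map. simpl. auto.
Qed.

Lemma gl_fst xs : map fst (gl_measure xs) = xs.
Proof. unfold gl_measure. rewrite map_map. simpl. apply map_nth_seq. Qed.

Lemma gl_in xs p : In p (gl_measure xs) ->
  exists i, (i < length xs)%nat /\ p = (nth i xs 0, gl_weight xs i).
Proof.
  unfold gl_measure. intro H. apply in_map_iff in H. destruct H as [i [<- Hi]].
  apply in_seq in Hi. exists i; split; auto; lia.
Qed.

Lemma gl_moment xs l : moment (gl_measure xs) l =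
  sumi (fun i => gl_weight xs i * nth i xs 0 ^ l) (seq 0 (length xs)).
Proof.
  unfold moment, gl_measure. generalize (seq 0 (length xs)). intro s.
  induction s; simpl; auto. rewrite IHs; auto.
Qed.

Lemma gl_mass xs : total_mass (gl_measure xs) =
  sumi (fun i => gl_weight xs i) (seq 0 (length xs)).
Proof.
  unfold total_mass, gl_measure. generalize (seq 0 (length xs)). intro s.
  induction s; simpl; auto. rewrite IHs; auto.
Qed.

Lemma u_ge0 eta : 0 <= u eta.
Proof. induction eta; simpl. lra. eapply Rle_trans; [|apply Rmax_r]. auto. Qed.

Lemma u_ge eta p : In p eta -> Rabs (fst p) <= u eta.
Proof.
  induction eta as [|q eta IH]; simpl; intros H. contradiction.
  destruct H as [->|H]. apply Rmax_l. eapply Rle_trans; [|apply Rmax_r]. auto.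
Qed.

Lemma u_le eta M : 0 <= M -> (forall p, In p eta -> Rabs (fst p) <= M) -> u eta <= M.
Proof.
  induction eta as [|q eta IH]; simpl; intros H0 H. auto.
  apply Rmax_lub. apply H; auto. apply IH; auto.
Qed.

Lemma nodes_sym r xs : Nodes r xs -> (1 <= r)%nat ->
  nth (r - 1) xs 0 = - nth 0 xs 0 /\ nth 0 xs 0 <= 0 /\
  forall k, (k < r)%nat -> nth 0 xs 0 <= nth k xs 0 <= - nth 0 xs 0.
Proof.
  intros H Hr.
  assert (Hneg : forall y, In y xs -> In (-y) xs).
  { intros y Hy. destruct H as [_ [_ Hz]]. apply Hz. apply Hz in Hy.
    rewrite (proj1 (leg_par r y)), Hy. ring. }
  assert (Hrng : forall y, In y xs -> nth 0 xs 0 <= y <= nth (r - 1) xs 0).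
  { intros y Hy. destruct (In_nth xs y 0 Hy) as [k [Hk <-]].
    assert (Hl := proj1 H). rewrite Hl in Hk.
    split; apply (nodes_le r xs H); lia. }
  assert (In0 : In (nth 0 xs 0) xs). apply nth_In. destruct H as [-> _]; lia.
  assert (Inr : In (nth (r - 1) xs 0) xs). apply nth_In. destruct H as [-> _]; lia.
  assert (A1 := Hrng _ (Hneg _ In0)). assert (A2 := Hrng _ (Hneg _ Inr)).
  assert (E : nth (r - 1) xs 0 = - nth 0 xs 0) by lra.
  split; auto. assert (A3 := Hrng _ In0). split. lra.
  intros k Hk. rewrite <- E. apply Hrng. apply nth_In. destruct H as [-> _]; lia.
Qed.

Definition integ (eta : fmeasure) (f : R -> R) : R :=
  fold_right (fun p acc => snd p * f (fst p) + acc) 0 eta.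

Lemma integ_ext eta f g : (forall x, f x = g x) -> integ eta f = integ eta g.
Proof. intro H; induction eta; simpl; auto. rewrite H, IHeta; auto. Qed.

Lemma integ_plus eta f g : integ eta (fun x => f x + g x) = integ eta f + integ eta g.
Proof. induction eta; simpl. ring. rewrite IHeta; ring. Qed.

Lemma integ_scal eta c f : integ eta (fun x => c * f x) = c * integ eta f.
Proof. induction eta; simpl. ring. rewrite IHeta; ring. Qed.

Lemma integ_zero eta f : (forall p, In p eta -> snd p * f (fst p) = 0) -> integ eta f = 0.
Proof. induction eta; simpl; intros H; auto. rewrite H, IHeta; auto. ring. Qed.

Lemma integ_nonpos_zero eta f : (forall p, In p eta -> snd p * f (fst p) <= 0) ->
  integ eta f = 0 -> forall p, In p eta -> snd p * f (fst p) = 0.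
Proof.
  induction eta as [|q eta IH]; simpl; intros H E p Hp. contradiction.
  assert (H1 := H q (or_introl eq_refl)).
  assert (H2 : integ eta f <= 0).
  { clear IH E Hp. induction eta as [|q' eta IH']; simpl. lra.
    assert (snd q' * f (fst q') <= 0) by (apply H; simpl; auto).
    assert (integ eta f <= 0). apply IH'. intros; apply H; simpl in *; tauto. unfold integ in *. lra. }
  unfold integ in E, H2. fold (integ eta f) in *.
  destruct Hp as [->|Hp]. lra. apply IH; auto. lra.
Qed.

Lemma integ_poly n eta f : in_Xi n eta -> pdeg f n -> integ eta f = L f.
Proof.
  intros [_ [_ [_ Hm]]] [cs [H1 H2]].
  rewrite (integ_ext _ f (fun x => x ^ 0 * peval cs x)) by (intros; rewrite H2; simpl; ring).
  rewrite (L_ext f (fun x => x ^ 0 * peval cs x)) by (intros; rewrite H2; simpl; ring).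
  assert (G : forall cs j, (j + length cs <= S n)%nat ->
    integ eta (fun x => x ^ j * peval cs x) = L (fun x => x ^ j * peval cs x)).
  2: apply G; simpl; lia.
  clear H1 H2 cs.
  induction cs as [|c cs IH]; intros j Hl; simpl in Hl.
  - rewrite integ_zero. transitivity (L (fun _ => 0)). symmetry; apply L0. apply L_ext; intros; simpl; ring.
    intros; simpl; ring.
  - rewrite (integ_ext _ _ (fun x => c * x ^ j + x ^ (S j) * peval cs x)) by (intros; simpl; ring).
    rewrite (L_ext _ (fun x => c * x ^ j + x ^ (S j) * peval cs x)) by (intros; simpl; ring).
    rewrite integ_plus, integ_scal, L_plus, L_scal, IH.
    f_equal. f_equal. change (moment eta j = L (fun x => x ^ j)). apply Hm; lia.
    lia. eapply pdeg_exRI; apply pdeg_pow.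
    apply exRI_scal. eapply pdeg_exRI; apply pdeg_pow.
    apply (pdeg_exRI _ (S j + length cs)). apply pdeg_mul. apply pdeg_pow. exists cs; split; [lia|reflexivity].
Qed.

Lemma prodl_root a l : In a l -> prodl l a = 0.
Proof. induction l as [|b l IH]; simpl; intros H. contradiction.
  destruct H as [->|H]. ring. rewrite IH; auto; ring. Qed.

Lemma prodl_nz a l : ~ In a l -> prodl l a <> 0.
Proof. induction l as [|b l IH]; simpl; intros H. lra.
  apply Rmult_integral_contrapositive; split. intro E; apply H; left; lra. apply IH; tauto. Qed.

Lemma sumi_zero f l : (forall i, In i l -> f i = 0) -> sumi f l = 0.
Proof. induction l; simpl; intros H; auto. rewrite H, IHl; auto. ring. Qed.

Theorem lemmaA1 (n : nat) (xs : list R)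
  (Hlen : length xs = (n / 2 + 1)%nat)
  (Hsorted : forall i j : nat, (i < j < length xs)%nat ->
             nth i xs 0 < nth j xs 0)
  (Hzeros : forall x : R, legendre (n / 2 + 1) x = 0 <-> In x xs) :
  in_Xi n (gl_measure xs) /\
  u (gl_measure xs) = Rabs (nth 0 xs 0) /\
  (forall eta : fmeasure, in_Xi n eta -> Rabs (nth 0 xs 0) <= u eta).
Proof.
  set (r := (n / 2 + 1)%nat) in *.
  assert (H : Nodes r xs).
  { split; auto. split; auto. intros; apply Hsorted; lia. }
  assert (Hr : (1 <= r)%nat) by lia.
  assert (Hn1 : (n <= 2 * r - 1)%nat).
  { pose proof (Nat.div_mod_eq n 2). pose proof (Nat.mod_upper_bound n 2). unfold r. lia. }
  assert (Hn2 : (2 * r - 2 <= n)%nat).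
  { pose proof (Nat.div_mod_eq n 2). pose proof (Nat.mod_upper_bound n 2). unfold r. lia. }
  destruct (nodes_sym r xs H Hr) as [Sym [X0neg Xrng]].
  set (x0 := nth 0 xs 0) in *.
  assert (Abs0 : Rabs x0 = - x0) by (apply Rabs_left1; auto).
  assert (Part1 : in_Xi n (gl_measure xs)).
  { split; [|split; [|split]].
    - rewrite gl_fst. apply (nodes_NoDup r xs H).
    - intros p Hp. destruct (gl_in xs p Hp) as [i [Hi ->]]. rewrite Hlen in Hi. simpl.
      split. apply (node_bound r); auto. apply (weight_pos r); auto.
    - rewrite gl_mass, Hlen.
      transitivity (L (fun _ => 1)).
      rewrite (gauss r xs (fun _ => 1)); auto. apply sumi_ext; intros; ring.
      apply pdeg_mono with 0%nat. lia. apply pdeg_const.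
      unfold L. rewrite RInt_const. unfold scal; simpl; unfold mult; simpl. field.
    - intros l Hl. rewrite gl_moment, Hlen.
      change (/ 2 * RInt (fun x => x ^ l) (-1) 1) with (L (fun x => x ^ l)).
      rewrite (gauss r xs); auto. apply pdeg_mono with l. lia. apply pdeg_pow. }
  split; auto. split.
  - apply Rle_antisym.
    + apply u_le. apply Rabs_pos. intros p Hp. destruct (gl_in xs p Hp) as [i [Hi ->]].
      rewrite Hlen in Hi. simpl. rewrite Abs0. destruct (Xrng i Hi). apply Rabs_le; lra.
    + apply (u_ge _ (x0, gl_weight xs 0)). unfold gl_measure. rewrite Hlen.
      apply in_map_iff. exists 0%nat; split; auto. apply in_seq; lia.
  - intros eta Heta.
    destruct (Nat.eq_dec r 1) as [r1|r2].
    { rewrite r1 in Sym. simpl in Sym. fold x0 in Sym. assert (x0 = 0) by lra.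
      rewrite H0, Rabs_R0. apply u_ge0. }
    apply Rnot_lt_le. intro Hlt.
    set (mid := map (fun i => nth i xs 0) (seq 1 (r - 2))).
    set (Q := prodl mid).
    assert (HQ : pdeg Q (r - 2)).
    { replace (r - 2)%nat with (length mid). apply pdeg_prodl. unfold mid. rewrite length_map, length_seq; auto. }
    set (xr := nth (r - 1) xs 0) in *.
    set (p := fun x => ((x - x0) * (x - xr)) * (Q x * Q x)).
    assert (Hp : pdeg p (2 * r - 2)).
    { replace (2 * r - 2)%nat with (2 + ((r - 2) + (r - 2)))%nat by lia.
      apply pdeg_mul. replace 2%nat with (1 + 1)%nat by lia. apply pdeg_mul; apply pdeg_lin.
      apply pdeg_mul; auto. }
    assert (Lp : L p = 0).
    { rewrite (gauss r xs); auto. apply sumi_zero. intros i Hi. apply in_seq in Hi.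
      unfold p. destruct (Nat.eq_dec i 0) as [->|]. fold x0. ring.
      destruct (Nat.eq_dec i (r - 1)) as [->|]. fold xr. ring.
      unfold Q. rewrite prodl_root. ring. unfold mid. apply in_map_iff. exists i; split; auto.
      apply in_seq. lia. apply pdeg_mono with (2 * r - 2)%nat; auto; lia. }
    assert (Ip : integ eta p = 0).
    { rewrite (integ_poly n); auto. apply pdeg_mono with (2 * r - 2)%nat; auto. }
    assert (Atoms : forall a, In a eta -> snd a * p (fst a) <= 0).
    { intros a Ha. destruct Heta as [_ [Hat _]]. destruct (Hat a Ha) as [_ Hm].
      assert (Hu := u_ge eta a Ha). rewrite Abs0 in Hlt.
      assert (Hy : Rabs (fst a) < - x0) by lra. apply Rabs_def2 in Hy.
      unfold p. assert (0 <= Q (fst a) * Q (fst a)) by apply Rle_0_sqr.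
      rewrite Sym. destruct Hy as [Hy1 Hy2].
      assert (A1 : 0 < fst a - x0) by lra. assert (A2 : 0 < - (fst a - - x0)) by lra.
      assert (A3 : 0 < (fst a - x0) * (- (fst a - - x0))) by (apply Rmult_lt_0_compat; auto).
      set (t := (fst a - x0) * (fst a - - x0)). assert (t < 0) by (unfold t; lra).
      set (sq := Q (fst a) * Q (fst a)) in *. set (m := snd a) in *. 
      assert (0 <= m * (- t * sq)) by (apply Rmult_le_pos; [lra| apply Rmult_le_pos; lra]).
      lra. }
    assert (Z := integ_nonpos_zero eta p Atoms Ip).
    set (qq := fun x => Q x * Q x).
    assert (Hqq : pdeg qq (2 * r - 4)).
    { replace (2 * r - 4)%nat with ((r - 2) + (r - 2))%nat by lia. apply pdeg_mul; auto. }
    assert (Iq : integ eta qq = 0).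
    { apply integ_zero. intros a Ha. assert (Za := Z a Ha).
      destruct Heta as [_ [Hat _]]. destruct (Hat a Ha) as [_ Hm].
      assert (Hu := u_ge eta a Ha). rewrite Abs0 in Hlt.
      assert (Hy : Rabs (fst a) < - x0) by lra. apply Rabs_def2 in Hy.
      unfold p in Za. rewrite Sym in Za. unfold qq.
      destruct Hy as [Hy1 Hy2].
      assert (A1 : 0 < fst a - x0) by lra. assert (A2 : 0 < - (fst a - - x0)) by lra.
      assert (A3 : 0 < (fst a - x0) * (- (fst a - - x0))) by (apply Rmult_lt_0_compat; auto).
      assert ((fst a - x0) * (fst a - - x0) <> 0) by lra.
      apply Rmult_integral in Za. destruct Za as [Za|Za]. lra.
      apply Rmult_integral in Za. destruct Za as [Za|Za]. contradiction. rewrite Za; ring. }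
    assert (Lq : L qq = 0).
    { rewrite <- Iq. symmetry. apply (integ_poly n); auto. apply pdeg_mono with (2 * r - 4)%nat; auto; lia. }
    rewrite (gauss r xs) in Lq; auto.
    2: apply pdeg_mono with (2 * r - 4)%nat; auto; lia.
    assert (Q0 : Q x0 <> 0).
    { unfold Q. apply prodl_nz. unfold mid. intro Hin. apply in_map_iff in Hin.
      destruct Hin as [i [Ei Hi]]. apply in_seq in Hi.
      apply (nodes_distinct r xs H i 0); auto; lia. }
    assert (Pos : gl_weight xs 0 * qq (nth 0 xs 0) <= sumi (fun i => gl_weight xs i * qq (nth i xs 0)) (seq 0 r)).
    { apply (sumi_ge (fun i => gl_weight xs i * qq (nth i xs 0))).
      intros i Hi. apply in_seq in Hi. apply Rmult_le_pos. left; apply (weight_pos r); auto; lia.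
      apply Rle_0_sqr. apply in_seq; lia. }
    assert (0 < gl_weight xs 0 * qq (nth 0 xs 0)).
    { apply Rmult_lt_0_compat. apply (weight_pos r); auto; lia. unfold qq. fold x0.
      apply Rsqr_pos_lt; auto. }
    lra.
Qed.
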